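(* Let $d$ be a positive integer, let $y_1, \ldots, y_d$ and $C$ be positive real numbers, and define $\pi : \mathbb{Z}^d \to \mathbb{R}$ by $\pi(x_1, \ldots, x_d) = \sum_{i=1}^d x_i y_i$. Let $O^d = \mathbb{Z}_{\ge 0}^d$. Suppose $S \subseteq O^d$ is a finite set such that $\pi(\mathbf{s}) \le C$ for all $\mathbf{s} \in S$, and such that $O^d + (O^d \setminus S) \subseteq O^d \setminus S$, where $A + B = \{a + b : a \in A, b \in B\}$. Then \[ (d+1) \sum_{\mathbf{s} \in S} \bigl(C - \pi(\mathbf{s})\bigr) \ge C\,|S|. \] *)

(* Defs.v *)
From HB Require Import structures.
From mathcomp Require Import all_boot all_order all_algebra.
Set Implicit Arguments. Unset Strict Implicit. Unset Printing Implicit Defensive.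
Import Order.TTheory GRing.Theory Num.Theory.
Local Open Scope ring_scope.

Definition pt (d : nat) := {ffun 'I_d -> nat}.

Definition ptadd (d : nat) (a b : pt d) : pt d := [ffun i => (a i + b i)%N].

Definition proj (R : realFieldType) (d : nat) (y : 'I_d -> R) (x : pt d) : R :=
  \sum_(i < d) (x i)%:R * y i.

(* Main.v *)
Require Import Defs.
From HB Require Import structures.
From mathcomp Require Import all_boot all_order all_algebra.
From mathcomp Require Import zify ring lra.
Set Implicit Arguments. Unset Strict Implicit.
Import Order.TTheory GRing.Theory Num.Theory.
Local Open Scope ring_scope.

Definition belowi (d : nat) (i : 'I_d) (t s : pt d) : bool :=
  (t i < s i)%N && [forall j, (j != i) ==> (t j == s j)].

Definition updi (d : nat) (s : pt d) (i : 'I_d) (k : nat) : pt d :=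
  [ffun j => if j == i then k else s j].

Lemma count_sum T (a : pred T) (r : seq T) : count a r = (\sum_(x <- r) a x)%N.
Proof. by elim: r => [|x r IH]; rewrite ?big_nil ?big_cons //= IH. Qed.

Lemma sum_const_seq (R : realFieldType) T (r : seq T) (c : R) :
  \sum_(x <- r) c = c * (size r)%:R.
Proof.
elim: r => [|x r IH]; rewrite ?big_nil ?big_cons /= ?mulr0 // IH.
by rewrite -addn1 natrD mulrDr mulr1 addrC.
Qed.

Lemma countA d (i : 'I_d) (S : seq (pt d)) (hS : uniq S)
  (hdown : forall a b : pt d, b \notin S -> ptadd a b \notin S) s :
  s \in S -> count (belowi i ^~ s) S = s i.
Proof.
move=> sS.
have hp : perm_eq (filter (belowi i ^~ s) S) (map (updi s i) (iota 0 (s i))).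
  apply: uniq_perm; first exact: filter_uniq.
    rewrite map_inj_uniq ?iota_uniq // => k1 k2 /ffunP /(_ i).
    by rewrite !ffunE eqxx.
  move=> t; rewrite mem_filter; apply/andP/mapP.
    move=> [/andP [lt /forallP fa] tS]; exists (t i).
      by rewrite mem_iota.
    apply/ffunP => j; rewrite ffunE; case: eqP => [->//|/eqP ne].
    by move: (fa j); rewrite ne /= => /eqP.
  move=> [k]; rewrite mem_iota add0n => /andP [_ lk] ->; split.
    apply/andP; split; first by rewrite ffunE eqxx.
    by apply/forallP => j; apply/implyP => ne; rewrite ffunE (negPf ne).
  apply/negPn/negP => nS.
  have := hdown [ffun j => if j == i then (s i - k)%N else 0%N] _ nS.
  suff -> : ptadd [ffun j => if j == i then (s i - k)%N else 0%N] (updi s i k) = s by rewrite sS.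
  apply/ffunP => j; rewrite !ffunE; case: eqP => [->|_] //.
  by rewrite subnK // ltnW.
by rewrite -size_filter (perm_size hp) size_map size_iota.
Qed.

Lemma proj_upd (R : realFieldType) d (y : 'I_d -> R) (i : 'I_d) (s t : pt d) :
  (forall j, j != i -> t j = s j) ->
  proj y t = proj y s + ((t i)%:R - (s i)%:R) * y i.
Proof.
move=> h; rewrite /proj (bigD1 i) //= [in RHS](bigD1 i) //=.
rewrite (eq_bigr (fun j => (s j)%:R * y j)); last by move=> j /h ->.
ring.
Qed.

Lemma countB (R : realFieldType) d (y : 'I_d -> R) (hy : forall i, 0 < y i) (C : R)
  (i : 'I_d) (S : seq (pt d)) (hS : uniq S)
  (hSC : forall s, s \in S -> proj y s <= C) s :
  s \in S -> (count (belowi i s) S)%:R * y i <= C - proj y s.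
Proof.
move=> sS; set n := count _ _.
have hs := hSC s sS.
case: (posnP n) => [->|npos]; first by rewrite mul0r subr_ge0.
set L := filter (belowi i s) S.
set M := map (fun t : pt d => (t i - (s i).+1)%N) L.
have uM : uniq M.
  rewrite map_inj_in_uniq ?filter_uniq // => t1 t2.
  rewrite !mem_filter => /andP [/andP [l1 /forallP f1] _] /andP [/andP [l2 /forallP f2] _] e.
  apply/ffunP => j; case: (eqVneq j i) => [->|ne].
    by rewrite -(subnK l1) -(subnK l2) e.
  move: (f1 j) (f2 j); rewrite ne /= => /eqP <- /eqP <-.
  done.
have sM : size M = n by rewrite size_map size_filter.
have : ~~ all (fun x => x < n.-1)%N M.
  apply/negP => /allP al.
  have sub : {subset M <= iota 0 n.-1}.
    by move=> x xM; rewrite mem_iota add0n; exact: al.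
  have := uniq_leq_size uM sub.
  rewrite size_iota sM; lia.
case/allPn => x /mapP [t]; rewrite mem_filter => /andP [/andP [lt /forallP fa] tS] -> hx.
have ht := hSC t tS.
have e : proj y t = proj y s + ((t i)%:R - (s i)%:R) * y i.
  apply: proj_upd => j ne; by move: (fa j); rewrite ne /= => /eqP.
have : (n%:R : R) <= (t i)%:R - (s i)%:R.
  rewrite -natrB; last exact: ltnW.
  rewrite ler_nat -(subnSK lt) -{1}(prednK npos) ltnS leqNgt //.
move=> hn.
have hyi := hy i.
have : n%:R * y i <= ((t i)%:R - (s i)%:R) * y i.
  by rewrite ler_wpM2r // ltW.
lra.
Qed.

Theorem lemma3 (R : realFieldType) (d : nat) (hd : (0 < d)%N)
  (y : 'I_d -> R) (hy : forall i, 0 < y i) (C : R) (hC : 0 < C)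
  (S : seq (pt d)) (hS : uniq S)
  (hSC : forall s, s \in S -> proj y s <= C)
  (hdown : forall a b : pt d, b \notin S -> ptadd a b \notin S) :
  (d.+1)%:R * (\sum_(s <- S) (C - proj y s)) >= C * (size S)%:R.
Proof.
set X := \sum_(s <- S) (C - proj y s).
have key : forall i : 'I_d, \sum_(s <- S) (s i)%:R * y i <= X.
  move=> i.
  rewrite -mulr_suml -natr_sum.
  rewrite (eq_big_seq (fun s => count (belowi i ^~ s) S)); last first.
    by move=> s sS; rewrite countA.
  under eq_bigr do rewrite count_sum.
  rewrite exchange_big /=.
  under eq_bigr do rewrite -count_sum.
  rewrite natr_sum mulr_suml /X big_seq_cond [X in _ <= X]big_seq_cond.
  apply: ler_sum => s /andP [sS _]; exact: countB.
have hpi : \sum_(s <- S) proj y s <= X *+ d.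
  rewrite /proj exchange_big /=.
  rewrite -[d in X *+ d]card_ord -sumr_const.
  by apply: ler_sum => i _; apply: key.
have eX : X = C * (size S)%:R - \sum_(s <- S) proj y s.
  by rewrite /X sumrB sum_const_seq.
rewrite -mulr_natr in hpi.
rewrite -addn1 natrD.
lra.
Qed.
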